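(* Let $Z_1, Z_2, \ldots$ be i.i.d. from a distribution $\mathcal{D}$ on a set $\mathbb{Z}$, let $\ell:\Theta\times\mathbb{Z}\to[0,\infty)$ be a loss function with risk $R(\theta)=\mathbb{E}_{Z\sim\mathcal{D}}\{\ell(\theta;Z)\}$ and risk minimizer $\theta^*=\arg\min_{\theta\in\Theta}R(\theta)$. Suppose the strong central condition holds with learning rate $\bar\omega>0$. For $k\ge 1$ let $\widehat\theta_k$ be any almost-empirical-risk-minimizer (AERM) computed from $Z^k=(Z_1,\ldots,Z_k)$, let $\widehat\theta_0\in\Theta$ be a fixed constant, and for $\omega\ge 0$ define the online GUe-value $$G_{n,\mathrm{on}}(\theta)=\exp\Bigl[-\omega\sum_{i=1}^n\{\ell(\widehat\theta_{i-1};Z_i)-\ell(\theta;Z_i)\}\Bigr].$$ If $\omega\in[0,\bar\omega)$, then $(G_{n,\mathrm{on}}(\theta^* ))_{n\in\mathbb{N}}$ is an e-process.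
   Context: The empirical risk is $\widehat R_n(\theta)=n^{-1}\sum_{i=1}^n\ell(\theta;Z_i)$. For fixed constants $\varepsilon,\delta\ge0$, an $(\varepsilon,\delta)$-AERM based on $Z^n$ is an estimator $\widehat\theta_n$ (a measurable function of $Z^n$) with $\widehat R_n(\widehat\theta_n)\le\inf_{\theta\in\Theta}\widehat R_n(\theta)+\delta/n^{1+\varepsilon}$; an AERM is an $(\varepsilon,\delta)$-AERM for some such constants. Strong central condition with learning rate $\bar\omega>0$: $\mathbb{E}_{Z\sim\mathcal{D}}\exp[-\omega\{\ell(\theta;Z)-\ell(\theta^*;Z)\}]\le1$ for all $\theta\in\Theta$ and all $\omega\in[0,\bar\omega)$. An e-process is a non-negative supermartingale $(E_n)_{n\in\mathbb{N}}$ (with respect to the filtration generated by the data) such that $\mathbb{E}(E_\tau)\le 1$ for every stopping time $\tau$. *)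

(* Defs.v *)
From HB Require Import structures.
From mathcomp Require Import all_boot all_order all_algebra.
From mathcomp Require Import all_classical all_reals all_analysis.
Set Implicit Arguments. Unset Strict Implicit. Unset Printing Implicit Defensive.
Import Order.TTheory GRing.Theory Num.Theory.
Local Open Scope classical_set_scope.
Local Open Scope ring_scope.

Section defs.
Context {R : realType}.

Definition mutually_independent {dO dZ} {Om : measurableType dO}
  {Zs : measurableType dZ} (P : probability Om R) (Z : nat -> Om -> Zs) :=
  forall (I : seq nat) (B : nat -> set Zs), uniq I ->
    (forall i, measurable (B i)) ->
    P (\bigcap_(i in [set j | j \in I]) (Z i @^-1` B i)) =
    (\prod_(i <- I) P (Z i @^-1` B i))%E.

Definition has_law {dO dZ} {Om : measurableType dO} {Zs : measurableType dZ}
  (P : probability Om R) (X : Om -> Zs) (D : probability Zs R) :=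
  forall B, measurable B -> P (X @^-1` B) = D B.

Definition data_filtration {dO dZ} {Om : measurableType dO}
  {Zs : measurableType dZ} (Z : nat -> Om -> Zs) (n : nat) : set (set Om) :=
  <<s [set A | exists i, (i < n)%N /\ exists B, measurable B /\ A = Z i @^-1` B] >>.

Definition measurable_wrt {dT} {Om : Type} {T : measurableType dT}
  (F : set (set Om)) (X : Om -> T) :=
  forall B, measurable B -> F (X @^-1` B).

Definition stopping_time {Om : Type} (F : nat -> set (set Om)) (tau : Om -> nat) :=
  forall n, F n (tau @^-1` [set n]).

(* Non-negative supermartingale w.r.t. F: adapted, integrable, and
   E[E_{n+1} | F_n] <= E_n a.s., written through the defining property of
   conditional expectation: for all A in F_n, E[E_{n+1} 1_A] <= E[E_n 1_A]. *)
Definition nonneg_supermartingale {dO} {Om : measurableType dO}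
  (P : probability Om R) (F : nat -> set (set Om)) (E : nat -> Om -> R) :=
  [/\ forall n x, 0 <= E n x,
      forall n, measurable_wrt (F n) (E n),
      forall n, P.-integrable setT (fun x => (E n x)%:E) &
      forall n A, F n A ->
        (\int[P]_(x in A) (E n.+1 x)%:E <= \int[P]_(x in A) (E n x)%:E)%E].

Definition e_process {dO} {Om : measurableType dO}
  (P : probability Om R) (F : nat -> set (set Om)) (E : nat -> Om -> R) :=
  nonneg_supermartingale P F E /\
  forall tau : Om -> nat, stopping_time F tau ->
    (\int[P]_x (E (tau x) x)%:E <= 1)%E.

Definition emp_risk {Om Th Zs : Type} (loss : Th -> Zs -> R)
  (Z : nat -> Om -> Zs) (k : nat) (x : Om) (th : Th) : R :=
  k%:R^-1 * \sum_(i < k) loss th (Z i x).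

Definition is_AERM {Om Th Zs : Type} (loss : Th -> Zs -> R)
  (Z : nat -> Om -> Zs) (thhat : nat -> Om -> Th) (eps delta : R) :=
  forall k x, (1 <= k)%N ->
    emp_risk loss Z k x (thhat k x) <=
    inf (range (emp_risk loss Z k x)) + delta / (k%:R `^ (1 + eps)).

Definition risk {dZ} {Th : Type} {Zs : measurableType dZ} (D : probability Zs R)
  (loss : Th -> Zs -> R) (th : Th) : \bar R :=
  (\int[D]_z (loss th z)%:E)%E.

Definition strong_central {dZ} {Th : Type} {Zs : measurableType dZ}
  (D : probability Zs R) (loss : Th -> Zs -> R) (thstar : Th) (wbar : R) :=
  forall th w, 0 <= w -> w < wbar ->
    (\int[D]_z (expR (- w * (loss th z - loss thstar z)))%:E <= 1)%E.

(* Online GUe-value G_{n,on}(theta), data indexed from 0 *)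
Definition G_on {Om Th Zs : Type} (loss : Th -> Zs -> R) (Z : nat -> Om -> Zs)
  (thhat : nat -> Om -> Th) (w : R) (th : Th) (n : nat) (x : Om) : R :=
  expR (- w * \sum_(i < n) (loss (thhat i x) (Z i x) - loss th (Z i x))).

End defs.

(* Main.v *)
Require Import Defs.
From HB Require Import structures.
From mathcomp Require Import all_boot all_order all_algebra.
From mathcomp Require Import all_classical all_reals all_analysis.
From mathcomp Require Import measurable_realfun.
Import Order.TTheory GRing.Theory Num.Theory.
Local Open Scope classical_set_scope.
Local Open Scope ring_scope.
Section filt.
Context (R : realType) (dO dZ : measure_display) (Om : measurableType dO)
  (Zs : measurableType dZ) (P : probability Om R) (D : probability Zs R)
  (Z : nat -> Om -> Zs).
Hypothesis mZ : forall i, measurable_fun setT (Z i).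

Definition gens n : set (set Om) :=
  [set A | exists i, (i < n)%N /\ exists B, measurable B /\ A = Z i @^-1` B].
Definition Fn n := g_sigma_algebraType (gens n).

Lemma gens_meas n A : gens n A -> measurable A.
Proof. by move=> [i [_ [B [mB ->]]]]; rewrite -[_ @^-1` _]setTI; exact: mZ. Qed.

Lemma F_meas n A : data_filtration Z n A -> measurable A.
Proof.
apply: smallest_sub; first exact: sigma_algebra_measurable.
exact: gens_meas.
Qed.

Lemma F_mono m n : (m <= n)%N -> data_filtration Z m `<=` data_filtration Z n.
Proof.
move=> mn; apply: smallest_sub; first exact: smallest_sigma_algebra.
move=> A [i [im HB]]; apply: sub_sigma_algebra; exists i; split => //.
exact: leq_trans im mn.
Qed.

Definition idn n : Om -> Fn n := fun x => x.

Lemma idn_meas n : measurable_fun setT (idn n).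
Proof. by move=> _ B mB; rewrite setTI; apply: F_meas; exact: mB. Qed.

Lemma wrt_meas k n dT' (T' : measurableType dT') (f : Om -> T') :
  (k <= n)%N -> measurable_wrt (data_filtration Z k) f ->
  measurable_fun setT (f : Fn n -> T').
Proof. by move=> kn hf _ B mB; rewrite setTI; exact: (F_mono _ _ kn _ (hf B mB)). Qed.

Lemma Zi_meas i n : (i < n)%N -> measurable_fun setT (Z i : Fn n -> Zs).
Proof.
move=> ih _ B mB; rewrite setTI; apply: sub_sigma_algebra; exists i; split => //.
by exists B; split.
Qed.

Definition phin n : Om -> (Fn n * Zs)%type := fun x => (idn n x, Z n x).

Lemma phin_meas n : measurable_fun setT (phin n).
Proof. exact: measurable_fun_pair (idn_meas n) (mZ n). Qed.

HB.instance Definition _ n := isMeasurableFun.Build _ _ Om (Fn n) (idn n) (idn_meas n).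
HB.instance Definition _ n := isMeasurableFun.Build _ _ Om (Fn n * Zs)%type (phin n) (phin_meas n).

Definition Pn n := distribution P (idn n).
Definition Qn n := distribution P (phin n).

Definition Pi n : set (set Om) := [set A | exists B : nat -> set Zs,
  (forall i, measurable (B i)) /\ A = \bigcap_(i in [set i | (i < n)%N]) (Z i @^-1` B i)].

Hypothesis indep : mutually_independent P Z.
Hypothesis law : forall i, has_law P (Z i) D.

Lemma Pi_prob n (B : nat -> set Zs) : (forall i, measurable (B i)) ->
  P (\bigcap_(i in [set i | (i < n)%N]) (Z i @^-1` B i)) = (\prod_(0 <= i < n) D (B i))%E.
Proof.
move=> mB; have := indep (iota 0 n) B (iota_uniq 0 n) mB.
have -> : [set j | j \in iota 0 n] = [set i | (i < n)%N].
  by apply/seteqP; split => j /=; rewrite mem_iota add0n.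
move=> ->; rewrite /index_iota subn0; apply: eq_bigr => i _; exact: law.
Qed.

Lemma Pi_meas n A : Pi n A -> measurable (A : set (Fn n)).
Proof.
move=> [B [mB ->]]; apply: bigcap_measurableType => i /= ilt.
by apply: sub_sigma_algebra; exists i; split => //; exists (B i).
Qed.

Lemma Pi_setI n : setI_closed (Pi n).
Proof.
move=> _ _ [B1 [mB1 ->]] [B2 [mB2 ->]]; exists (fun i => B1 i `&` B2 i); split.
  by move=> i; exact: measurableI.
apply/seteqP; split => x /=.
  by move=> [h1 h2] i ni; split; [exact: h1|exact: h2].
by move=> h; split => i ni; have [] := h i ni.
Qed.

Lemma setT_Pi n : Pi n setT.
Proof. by exists (fun=> setT); split => //; apply/seteqP; split. Qed.

Lemma gens_Pi n : gens n `<=` Pi n.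
Proof.
move=> A [i [ilt [B [mB ->]]]]; exists (fun j => if j == i then B else setT); split.
  by move=> j; case: ifP.
apply/seteqP; split => x /=.
  by move=> hx j jn; case: eqP => [->|_].
by move=> hx; have := hx i ilt; rewrite eqxx.
Qed.

Definition GG n : set (set (Fn n * Zs)%type) :=
  [set A `*` C | A in Pi n & C in measurable].

Lemma prod_gen n : (measurable : set (set (Fn n * Zs)%type)) = <<s GG n >>.
Proof.
pose M := g_sigma_algebraType (GG n).
apply/seteqP; split; last first.
  apply: smallest_sub; first exact: sigma_algebra_measurable.
  move=> _ [A PA [C mC <-]]; apply: measurableX => //; exact: Pi_meas.
rewrite measurable_prod_measurableType.
apply: smallest_sub; first exact: smallest_sigma_algebra.
have AT : forall A : set (Fn n), measurable A -> <<s GG n >> (A `*` setT).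
  pose S := [set A : set (Fn n) | <<s GG n >> (A `*` setT)].
  suff : (measurable : set (set (Fn n))) `<=` S by move=> h A /h.
  apply: smallest_sub.
    split.
    - by rewrite /S /= set0X; exact: (@measurable0 _ M).
    - move=> A SA; rewrite /S /=.
      have -> : (setT `\` A) `*` setT = ~` (A `*` setT) :> set (Fn n * Zs).
        by apply/seteqP; split => -[x y] /=; rewrite /setD /setC /=; tauto.
      exact: (@measurableC _ M).
    - move=> F SF; rewrite /S /=.
      have -> : (\bigcup_k F k) `*` setT = \bigcup_k (F k `*` setT) :> set (Fn n * Zs).
        apply/seteqP; split => -[x y] /=.
          by move=> [[k _ Fk] _]; exists k.
        by move=> [k _ [Fk _]]; split => //; exists k.
      exact: (@bigcupT_measurable _ M).
  move=> A gA; apply: sub_sigma_algebra; exists A; first exact: gens_Pi.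
  by exists setT.
move=> _ [A mA [C mC <-]].
have -> : A `*` C = (A `*` setT) `&` (setT `*` C) :> set (Fn n * Zs).
  by rewrite -setXI setIT setTI.
apply: (@measurableI _ M); first exact: AT.
apply: sub_sigma_algebra; exists setT; first exact: setT_Pi.
by exists C.
Qed.

Lemma QnE n X : measurable X -> Qn n X = (Pn n \x D)%E X.
Proof.
apply: (measure_unique (GG n) (fun=> setT)).
- exact: prod_gen.
- move=> _ _ [A1 PA1 [C1 mC1 <-]] [A2 PA2 [C2 mC2 <-]]; rewrite -setXI.
  exists (A1 `&` A2); first exact: Pi_setI.
  by exists (C1 `&` C2) => //; exact: measurableI.
- by move=> _; exists setT; [exact: setT_Pi|exists setT => //; rewrite setXTT].
- by apply/seteqP; split => // x _; exists 0%N.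
- move=> _ [A PA [C mC <-]].
  transitivity (Pn n A * D C)%E; last first.
    by apply/esym/product_measure1E => //; exact: Pi_meas.
  move: PA => [B [mB ->]].
  pose B' := fun i => if i == n then C else B i.
  have mB' : forall i, measurable (B' i) by move=> i; rewrite /B'; case: ifP.
  transitivity (P (\bigcap_(i in [set i | (i < n.+1)%N]) (Z i @^-1` B' i))).
    change (P (phin n @^-1` ((\bigcap_(i in [set i | (i < n)%N]) (Z i @^-1` B i)) `*` C)) = P (\bigcap_(i in [set i | (i < n.+1)%N]) (Z i @^-1` B' i))).
    congr (P _).
    apply/seteqP; split => x /=.
      move=> [h1 h2] i /=; rewrite ltnS leq_eqVlt => /orP[/eqP ->|ilt].
        by rewrite /B' eqxx.
      by rewrite /B' (ltn_eqF ilt); exact: h1.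
    move=> h; split; last by have := h n (ltnSn n); rewrite /B' eqxx.
    move=> i ilt; have := h i (ltnW ilt); rewrite /B' (ltn_eqF ilt); exact.
  transitivity ((\prod_(0 <= i < n) D (B i)) * D C)%E; last first.
    by rewrite -Pi_prob.
  rewrite Pi_prob // big_nat_recr //= /B' eqxx.
  congr (_ * _)%E; apply: eq_big_nat => i /andP[_ ilt].
  by rewrite (ltn_eqF ilt).
- by move=> _; apply: (le_lt_trans (probability_le1 _ measurableT)); rewrite ltry.
Qed.

Context (dT : measure_display) (Th : measurableType dT) (loss : Th -> Zs -> R)
  (thstar : Th) (w : R).
Hypothesis mloss : measurable_fun setT (fun p : Th * Zs => loss p.1 p.2).
Hypothesis hc : forall th,
  (\int[D]_z (expR (- w * (loss th z - loss thstar z)))%:E <= 1)%E.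

Definition hh th z := expR (- w * (loss th z - loss thstar z)).

Lemma hh_meas dX (X : measurableType dX) (T : X -> Th) (g : X -> Zs) :
  measurable_fun setT T -> measurable_fun setT g ->
  measurable_fun setT (fun x => hh (T x) (g x)).
Proof.
move=> mT mg.
apply: (@measurableT_comp _ _ _ _ _ _ expR _ (fun x => - w * (loss (T x) (g x) - loss thstar (g x)))).
  exact: measurable_realfun.measurable_expR.
apply: measurable_funM; first exact: measurable_cst.
apply: measurable_funB.
  exact: (@measurableT_comp _ _ _ _ _ _ (fun p : Th * Zs => loss p.1 p.2) _
    (fun x => (T x, g x)) mloss (measurable_fun_pair mT mg)).
exact: (@measurableT_comp _ _ _ _ _ _ (fun p : Th * Zs => loss p.1 p.2) _
    (fun x => (thstar, g x)) mloss (measurable_fun_pair (measurable_cst _) mg)).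
Qed.

Lemma key n (Y : Om -> R) (T : Om -> Th) : (forall x, 0 <= Y x) ->
  measurable_fun setT (Y : Fn n -> R) -> measurable_fun setT (T : Fn n -> Th) ->
  (\int[P]_x (Y x * hh (T x) (Z n x))%:E <= \int[P]_x (Y x)%:E)%E.
Proof.
move=> Y0 mY mT.
pose f := fun p : (Fn n * Zs)%type => (Y p.1 * hh (T p.1) p.2)%:E.
have mf : measurable_fun setT f.
  have H : measurable_fun setT (fun p : (Fn n * Zs)%type => Y p.1 * hh (T p.1) p.2).
    have H1 : measurable_fun setT (fun p : (Fn n * Zs)%type => Y p.1).
      exact: (measurableT_comp mY measurable_fst).
    have H2 : measurable_fun setT (fun p : (Fn n * Zs)%type => hh (T p.1) p.2).
      have K1 : measurable_fun setT (fun p : (Fn n * Zs)%type => T p.1).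
        exact: (measurableT_comp mT measurable_fst).
      have K2 : measurable_fun setT (fun p : (Fn n * Zs)%type => p.2).
        exact: measurable_snd.
      exact: (hh_meas _ _ _ _ K1 K2).
    exact: (measurable_funM H1 H2).
  by move/measurable_EFinP: H.
have f0 : forall p, (0 <= f p)%E.
  by move=> p; rewrite lee_fin mulr_ge0 // expR_ge0.
have E1 : (\int[P]_x (Y x * hh (T x) (Z n x))%:E = \int[Qn n]_p f p)%E.
  by rewrite /Qn /distribution (ge0_integral_pushforward (phin_meas n)).
have E2 : (\int[Qn n]_p f p = \int[(Pn n \x D)%E]_p f p)%E.
  apply: eq_measure_integral => A mA _; exact: QnE.
have E3 : (\int[P]_x (Y x)%:E = \int[Pn n]_x (Y x)%:E)%E.
  rewrite /Pn /distribution (ge0_integral_pushforward (idn_meas n)) //.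
  - exact/measurable_EFinP.
  - by move=> x _; rewrite lee_fin.
rewrite E1 E2 E3 (fubini_tonelli1 _ mf f0).
apply: ge0_le_integral => //.
- by move=> x _; apply: integral_ge0 => y _; exact: f0.
- exact: measurable_fun_fubini_tonelli_F.
- exact/measurable_EFinP.
move=> x _; rewrite /fubini_F /f /=.
under eq_integral do rewrite EFinM.
rewrite ge0_integralZl_EFin //.
- rewrite -[leRHS]mule1; apply: lee_wpmul2l; first by rewrite lee_fin.
  exact: hc.
- by move=> y _; rewrite lee_fin expR_ge0.
- have K : measurable_fun setT (fun y : Zs => hh (T x) y).
    exact: (hh_meas _ _ (fun=> T x) id (measurable_cst _) (@measurable_id _ _ setT)).
  by move/measurable_EFinP: K.
Qed.

Context (thhat : nat -> Om -> Th).
Hypothesis mth : forall k, measurable_wrt (data_filtration Z k) (thhat k).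

Definition G n x := G_on loss Z thhat w thstar n x.

Lemma ld_meas dX (X : measurableType dX) (T : X -> Th) (g : X -> Zs) :
  measurable_fun setT T -> measurable_fun setT g ->
  measurable_fun setT (fun x => loss (T x) (g x) - loss thstar (g x)).
Proof.
move=> mT mg; apply: measurable_funB.
  exact: (@measurableT_comp _ _ _ _ _ _ (fun p : Th * Zs => loss p.1 p.2) _
    (fun x => (T x, g x)) mloss (measurable_fun_pair mT mg)).
exact: (@measurableT_comp _ _ _ _ _ _ (fun p : Th * Zs => loss p.1 p.2) _
    (fun x => (thstar, g x)) mloss (measurable_fun_pair (measurable_cst _) mg)).
Qed.

Lemma G_meas n : measurable_fun setT (G n : Fn n -> R).
Proof.
rewrite /G /G_on.
apply: (@measurableT_comp _ _ _ _ _ _ expR _ (fun x : Fn n => - w * \sum_(i < n)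
   (loss (thhat i x) (Z i x) - loss thstar (Z i x)))).
  exact: measurable_expR.
have K : measurable_fun setT (fun x : Fn n => \sum_(i < n)
   (loss (thhat i x) (Z i x) - loss thstar (Z i x))).
  apply: measurable_sum => i.
  apply: ld_meas.
    exact: (wrt_meas _ _ _ _ _ (ltnW (ltn_ord i)) (mth i)).
  exact: Zi_meas.
exact: (measurable_funM (measurable_cst _) K).
Qed.

Lemma G_measO n : measurable_fun setT (G n : Om -> R).
Proof.
move=> _ B mB; rewrite setTI; apply: F_meas.
have := G_meas n measurableT B mB; rewrite setTI; exact.
Qed.

Lemma G_ge0 n x : 0 <= G n x.
Proof. exact: expR_ge0. Qed.

Lemma G_step n x : G n.+1 x = G n x * hh (thhat n x) (Z n x).
Proof. by rewrite /G /G_on /hh big_ord_recr /= mulrDr expRD. Qed.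

Lemma G0 x : G 0 x = 1.
Proof. by rewrite /G /G_on big_ord0 mulr0 expR0. Qed.

Lemma step n A : data_filtration Z n A ->
  (\int[P]_(x in A) (G n.+1 x)%:E <= \int[P]_(x in A) (G n x)%:E)%E.
Proof.
move=> hA; rewrite (integral_mkcond A) (integral_mkcond A).
have e1 : (\int[P]_x ((fun x => (G n.+1 x)%:E) \_ A) x =
    \int[P]_x ((\1_A x * G n x) * hh (thhat n x) (Z n x))%:E)%E.
  apply: eq_integral => x _; rewrite patchE indicE G_step.
  by case: (x \in A); rewrite ?mul1r ?mul0r.
have e2 : (\int[P]_x ((fun x => (G n x)%:E) \_ A) x =
    \int[P]_x (\1_A x * G n x)%:E)%E.
  apply: eq_integral => x _; rewrite patchE indicE.
  by case: (x \in A); rewrite ?mul1r ?mul0r.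
rewrite e1 e2; apply: key.
- by move=> x; rewrite mulr_ge0 // ?G_ge0 // indicE.
- have K1 : measurable_fun setT (\1_A : Fn n -> R) by exact: measurable_indic.
  exact: (measurable_funM K1 (G_meas n)).
- exact: (wrt_meas _ _ _ _ _ (leqnn n) (mth n)).
Qed.

Lemma intG n : (\int[P]_x (G n x)%:E <= 1)%E.
Proof.
elim: n => [|n IH].
  under eq_integral do rewrite G0.
  by rewrite integral_cst // mul1e; apply: probability_le1.
apply: le_trans IH; apply: step.
exact: (@measurableT _ (Fn n)).
Qed.

Lemma G_int n : P.-integrable setT (fun x => (G n x)%:E).
Proof.
apply/integrableP; split.
  have K := G_measO n.
  by move/measurable_EFinP: K.
under eq_integral do rewrite gee0_abs ?lee_fin ?G_ge0 //.
exact: (le_lt_trans (intG n) (ltry _)).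
Qed.

Lemma stop (tau : Om -> nat) : stopping_time (data_filtration Z) tau ->
  (\int[P]_x (G (tau x) x)%:E <= 1)%E.
Proof.
move=> st.
pose Ek k := tau @^-1` [set k].
pose Ge M := [set x | (M <= tau x)%N].
have mEk k : measurable (Ek k) by apply: F_meas; exact: st.
have GeE M : Ge M.+1 = Ge M `&` ~` Ek M.
  apply/seteqP; split => x; rewrite /Ge /Ek /=.
    by move=> h; split; [exact: ltnW | move=> e; rewrite e ltnn in h].
  move=> [h1 h2]; rewrite ltn_neqAle h1 andbT; apply/eqP => e; apply: h2.
  by rewrite -e.
have GeF M : data_filtration Z M (Ge M).
  elim: M => [|M IH].
    have -> : Ge 0 = setT by apply/seteqP; split => x //= _.
    exact: (@measurableT _ (Fn 0)).
  apply: (F_mono M M.+1 (leqnSn M)); rewrite GeE.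
  exact: (@measurableI _ (Fn M) _ _ IH (@measurableC _ (Fn M) _ (st M))).
have GeS M : data_filtration Z M (Ge M.+1).
  rewrite GeE.
  exact: (@measurableI _ (Fn M) _ _ (GeF M) (@measurableC _ (Fn M) _ (st M))).
have mGe M : measurable (Ge M) by apply: F_meas; exact: GeF.
have mGE M : measurable_fun setT (fun x => (G M x)%:E).
  have K := G_measO M; by move/measurable_EFinP: K.
have inv M : (\sum_(0 <= k < M) \int[P]_(x in Ek k) (G k x)%:E +
    \int[P]_(x in Ge M) (G M x)%:E <= 1)%E.
  elim: M => [|M IH].
    rewrite big_geq // add0e.
    have -> : Ge 0 = setT by apply/seteqP; split => x //= _.
    exact: intG.
  apply: le_trans IH.
  rewrite big_nat_recr //= -addeA; apply: leeD2l.
  have -> : Ge M = Ek M `|` Ge M.+1.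
    apply/seteqP; split => x; rewrite /Ge /Ek /=.
      by rewrite leq_eqVlt => /orP[/eqP ->|h]; [left|right].
    by move=> [->|h] //; exact: ltnW.
  rewrite ge0_integral_setU //.
  - apply: leeD2l; exact: step (GeS M).
  - exact: measurable_funTS (mGE M).
  - by move=> x _; rewrite lee_fin G_ge0.
  - apply/disj_set2P; apply/seteqP; split => x //=; rewrite /Ek /Ge /=.
    by move=> [e h]; rewrite e ltnn in h.
have cover : \bigcup_k Ek k = setT by apply/seteqP; split => x // _; exists (tau x).
rewrite -cover ge0_integral_bigcup //; first last.
- exact: trivIset_preimage1.
- by move=> x _; rewrite lee_fin G_ge0.
- apply/(measurable_fun_bigcup _ mEk) => k.
  apply: (eq_measurable_fun (fun x => (G k x)%:E)).
    by move=> x; rewrite inE /Ek /= => ->.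
  exact: measurable_funTS (mGE k).
have eqk k : (\int[P]_(x in Ek k) (G (tau x) x)%:E = \int[P]_(x in Ek k) (G k x)%:E)%E.
  by apply: eq_integral => x; rewrite inE /Ek /= => ->.
apply: lime_le.
  by apply: is_cvg_nneseries => k _ _; apply: integral_ge0 => x _; rewrite lee_fin G_ge0.
apply: nearW => M.
rewrite (eq_bigr _ (fun k _ => eqk k)).
apply: le_trans (inv M); apply: leeDl.
by apply: integral_ge0 => x _; rewrite lee_fin G_ge0.
Qed.

Lemma mainL : e_process P (data_filtration Z) G.
Proof.
split; last exact: stop.
split.
- exact: G_ge0.
- move=> n B mB; have := G_meas n measurableT B mB; rewrite setTI; exact.
- exact: G_int.
- exact: step.
Qed.
End filt.

Theorem lemma1 (R : realType) (dO dZ dT : measure_display)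
  (Om : measurableType dO) (Zs : measurableType dZ) (Th : measurableType dT)
  (P : probability Om R) (D : probability Zs R) (Z : nat -> Om -> Zs)
  (loss : Th -> Zs -> R) (thstar : Th) (wbar w : R)
  (thhat : nat -> Om -> Th) (th0 : Th) :
  (forall i, measurable_fun setT (Z i)) ->
  mutually_independent P Z ->
  (forall i, has_law P (Z i) D) ->
  (forall th z, 0 <= loss th z) ->
  measurable_fun setT (fun p : Th * Zs => loss p.1 p.2) ->
  (forall th, (risk D loss thstar <= risk D loss th)%E) ->
  0 < wbar ->
  strong_central D loss thstar wbar ->
  (forall k, measurable_wrt (data_filtration Z k) (thhat k)) ->
  (exists eps delta : R, 0 <= eps /\ 0 <= delta /\ is_AERM loss Z thhat eps delta) ->
  (forall x, thhat 0%N x = th0) ->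
  0 <= w -> w < wbar ->
  e_process P (data_filtration Z) (G_on loss Z thhat w thstar).
Proof.
move=> mZ indep law loss0 mloss hmin wbar0 sc mth AERM hth0 w0 wlt.
have hc : forall th,
    (\int[D]_z (expR (- w * (loss th z - loss thstar z)))%:E <= 1)%E.
  by move=> th; exact: sc.
exact: (mainL R dO dZ Om Zs P D Z mZ indep law dT Th loss thstar w mloss hc thhat mth).
Qed.
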